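(* For a root $\beta=t_i-t_j$ of $\mathrm{SL}_n(\mathbb C)$, $w_\beta$ is a maximal element (in the Bruhat order) of $\Omega_H=\{w_\gamma:\gamma\in\Delta_H\}$ if and only if $(i,j)$ is a corner of the modified Hessenberg stair shape.
   Context: Let $G=\mathrm{SL}_n(\mathbb C)$, $n\ge2$, $B$ upper triangular, $T$ diagonal, $W=S_n$ with Bruhat order; $t_i-t_j$ denotes the root $\mathrm{diag}(t_1,\dots,t_n)\mapsto t_it_j^{-1}$ with root space $\mathbb C E_{ij}$. A Hessenberg function is a weakly increasing $h:\{1,\dots,n\}\to\{1,\dots,n\}$ with $j\le h(j)$; its Hessenberg subspace is $H=\{(a_{ij})\in\mathfrak{sl}_n: a_{ij}=0\text{ for }i>h(j)\}$ and $\Delta_H$ is the set of roots $t_i-t_j$ with $E_{ij}\in H$. For a root $\beta=t_i-t_j$, $w_\beta\in S_n$ denotes the longest permutation with $w_\beta(i)=1$ and $w_\beta(j)=n$. With the convention $h(0):=0$, the modified Hessenberg function is $\overline h(j)=j-1$ if $h(j-1)=j-1$ and $h(j)=j$, and $\overline h(j)=h(j)$ otherwise; set $\overline h(0):=0$. A pair $(i,j)\in\{1,\dots,n\}^2$ is a corner of the modified Hessenberg stair shape if $i=\overline h(j)$ and $\overline h(j-1)<\overline h(j)$. *)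

(* Defs.v *)
From HB Require Import structures.
From Stdlib Require Import Relations.
From mathcomp Require Import all_boot all_order all_fingroup.
Set Implicit Arguments. Unset Strict Implicit. Unset Printing Implicit Defensive.

(* Conventions: the paper's indices 1..n are represented by ordinals of 'I_n,
   the paper's index k corresponding to the ordinal with value k-1.
   Permutations of {1..n} are elements of {perm 'I_n}. *)

Definition perm_length (n : nat) (w : {perm 'I_n}) : nat :=
  #|[set p : 'I_n * 'I_n | (p.1 < p.2) && (w p.2 < w p.1)]|.

Definition bruhat_step (n : nat) (u v : {perm 'I_n}) : Prop :=
  exists a b : 'I_n, a != b /\ v = (u * tperm a b)%g /\ perm_length u < perm_length v.

Definition bruhat_le (n : nat) : relation {perm 'I_n} :=
  clos_refl_trans {perm 'I_n} (@bruhat_step n).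

Definition bruhat_lt (n : nat) (u v : {perm 'I_n}) : Prop :=
  bruhat_le u v /\ u <> v.

(* w is w_beta for beta = t_i - t_j : the longest permutation with
   w(i) = 1 and w(j) = n (0-based: w i = 0, w j = n-1). *)
Definition is_w_root (n : nat) (i j : 'I_n) (w : {perm 'I_n}) : Prop :=
  [/\ nat_of_ord (w i) = 0, nat_of_ord (w j) = n.-1 &
      forall v : {perm 'I_n}, nat_of_ord (v i) = 0 -> nat_of_ord (v j) = n.-1 ->
        perm_length v <= perm_length w].

(* Hessenberg function h : {1..n} -> {1..n} (values outside 1..n irrelevant). *)
Definition hessenberg (n : nat) (h : nat -> nat) : Prop :=
  (forall j, 1 <= j <= n -> j <= h j <= n) /\
  (forall j k, 1 <= j -> j <= k -> k <= n -> h j <= h k).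

Definition h0 (h : nat -> nat) (k : nat) : nat := if k == 0 then 0 else h k.

Definition hbar (h : nat -> nat) (j : nat) : nat :=
  if j == 0 then 0
  else if (h0 h j.-1 == j.-1) && (h j == j) then j.-1 else h j.

(* Root t_i - t_j (paper indices i,j, i <> j) lies in Delta_H: E_ij in H, i.e. i <= h(j). *)
Definition in_DeltaH (h : nat -> nat) (n : nat) (i j : 'I_n) : Prop :=
  i != j /\ i.+1 <= h j.+1.

Definition in_OmegaH (h : nat -> nat) (n : nat) (w : {perm 'I_n}) : Prop :=
  exists i j : 'I_n, in_DeltaH h i j /\ is_w_root i j w.

Definition maximal_in_OmegaH (h : nat -> nat) (n : nat) (w : {perm 'I_n}) : Prop :=
  in_OmegaH h w /\ ~ (exists v, in_OmegaH h v /\ bruhat_lt w v).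

Definition corner (h : nat -> nat) (i j : nat) : Prop :=
  i = hbar h j /\ hbar h j.-1 < hbar h j.

(* Main.v *)
From mathcomp Require Import zify.
Require Import Defs.
From HB Require Import structures.
From Stdlib Require Import Relations.
From mathcomp Require Import all_boot all_order all_fingroup.
Set Implicit Arguments. Unset Strict Implicit. Unset Printing Implicit Defensive.

Definition invs (n : nat) (u : {perm 'I_n}) : {set 'I_n * 'I_n} :=
  [set p : 'I_n * 'I_n | (p.1 < p.2) && (u p.2 < u p.1)].

Lemma lenE n (u : {perm 'I_n}) : perm_length u = #|invs u|.
Proof. by []. Qed.

Lemma ordneq n (x y : 'I_n) : x != y -> (x : nat) <> y.
Proof. by move=> /eqP H E; apply: H; apply: val_inj. Qed.

Lemma ordneq' n (x y : 'I_n) : (x : nat) <> y -> x != y.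
Proof. by move=> H; apply/eqP => E; apply: H; rewrite E. Qed.

Lemma perm_neq n (u : {perm 'I_n}) (x y : 'I_n) : x != y -> (u x : nat) <> u y.
Proof. by move=> H; apply: ordneq; rewrite (inj_eq perm_inj). Qed.

Lemma tp_conj n (u : {perm 'I_n}) (q p z : 'I_n) :
  tperm (u q) (u p) (u z) = u (tperm q p z).
Proof.
case: (tpermP q p z) => [->|->|/eqP Hq /eqP Hp]; rewrite ?tpermL ?tpermR //.
by rewrite tpermD // (inj_eq perm_inj) eq_sym.
Qed.

Lemma lenL n (u : {perm 'I_n}) (q p : 'I_n) : q < p -> u q < u p ->
  perm_length u < perm_length (u * tperm (u q) (u p))%g.
Proof.
move=> Hqp Hu.
set v := (u * _)%g.
have vE z : v z = u (tperm q p z) by rewrite permM tp_conj.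
pose btw (x : 'I_n) := (q < x < p).
pose psi (z : 'I_n * 'I_n) := if btw z.1 || btw z.2 then z else (tperm q p z.1, tperm q p z.2).
have btwt x : btw (tperm q p x) = btw x.
  by rewrite /btw; case: tpermP => [->|->|//]; lia.
have psiK : involutive psi.
  case=> x y; rewrite /psi /=; case: (boolP (btw x || btw y)) => H /=; first by rewrite H.
  by rewrite !btwt (negbTE H) !tpermK.
have psi_inj : injective psi := inv_inj psiK.
have sub : [set psi z | z in invs u] \subset invs v :\ (q, p).
  apply/subsetP => _ /imsetP [[x y] Hz ->].
  move: Hz; rewrite inE /= => /andP [Hxy Huxy].
  have Hq : q != p by apply: ordneq'; lia.
  rewrite /psi /btw /=.
  case: ifP => Hb.
  - rewrite !inE /= !vE Hxy /=.
    apply/andP; split.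
      apply/negP => /eqP [Ex Ey]; subst; lia.
    case: (tpermP q p x) => [Ex|Ex|/eqP Hxq /eqP Hxp]; subst;
    case: (tpermP q p y) => [Ey|Ey|/eqP Hyq /eqP Hyp]; subst; try lia.
  - rewrite !inE /= !vE !tpermK Huxy andbT.
    apply/andP; split.
      apply/negP => /eqP [Ex Ey].
      have : x = p by rewrite -(tpermK q p x) Ex tpermL.
      have : y = q by rewrite -(tpermK q p y) Ey tpermR.
      move=> E1 E2; subst; lia.
    case: (tpermP q p x) => [Ex|Ex|/eqP Hxq /eqP Hxp]; subst;
    case: (tpermP q p y) => [Ey|Ey|/eqP Hyq /eqP Hyp]; subst; try lia.
    1,2: move/negbT: Hb; rewrite negb_or !negb_and -!ltnNge.
    1,2: do ? [ match goal with H : is_true (_ != _) |- _ => move/ordneq: H => H end ]; lia.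
have inqp : (q, p) \in invs v.
  by rewrite inE /= !vE tpermL tpermR Hqp.
rewrite !lenE -(card_imset _ psi_inj) (cardsD1 (q, p) (invs v)) inqp add1n ltnS.
exact: subset_leq_card.
Qed.

Lemma stepK n (u : {perm 'I_n}) (a b : 'I_n) :
  perm_length u < perm_length (u * tperm a b)%g -> a < b -> (u^-1)%g a < (u^-1)%g b.
Proof.
move=> Hl Hab.
case: (ltngtP ((u^-1)%g a) ((u^-1)%g b)) => // H.
- set v := (u * tperm a b)%g.
  have va : v ((u^-1)%g a) = b by rewrite permM permKV tpermL.
  have vb : v ((u^-1)%g b) = a by rewrite permM permKV tpermR.
  have := lenL (u:=v) H; rewrite va vb => /(_ Hab).
  rewrite /v -mulgA tperm2 mulg1 => H2; lia.
- have : a = b by apply: (can_inj (permKV u)); apply: val_inj.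
  move=> E; subst; lia.
Qed.

Lemma step_pos n (u v : {perm 'I_n}) : bruhat_step u v ->
  [/\ (forall c : 'I_n, val c = 0 -> (u^-1)%g c <= (v^-1)%g c),
      (forall c : 'I_n, val c = n.-1 -> (v^-1)%g c <= (u^-1)%g c) &
      perm_length u < perm_length v].
Proof.
move=> [a [b [Hab [-> Hl]]]].
have E c : ((u * tperm a b)^-1)%g c = (u^-1)%g (tperm a b c).
  by apply: (perm_inj (s := (u * tperm a b)%g)); rewrite permKV permM permKV tpermK.
have Hab' := ordneq Hab.
have Hl' : perm_length u < perm_length (u * tperm b a)%g by rewrite tpermC.
have na := ltn_ord a; have nb := ltn_ord b.
split => // c /= Hc; rewrite E.
- case: (eqVneq c a) => [Ec|Hca]; first by rewrite Ec in Hc *; rewrite tpermL; apply: ltnW; apply: stepK => //; subst; lia.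
  case: (eqVneq c b) => [Ec|Hcb]; first by rewrite Ec in Hc *; rewrite tpermR; apply: ltnW; apply: stepK => //; subst; lia.
  by rewrite tpermD // eq_sym.
- case: (eqVneq c a) => [Ec|Hca]; first by rewrite Ec in Hc *; rewrite tpermL; apply: ltnW; apply: stepK => //; subst; lia.
  case: (eqVneq c b) => [Ec|Hcb]; first by rewrite Ec in Hc *; rewrite tpermR; apply: ltnW; apply: stepK => //; subst; lia.
  by rewrite tpermD // eq_sym.
Qed.

Lemma le_pos n (u v : {perm 'I_n}) : bruhat_le u v ->
  [/\ (forall c : 'I_n, val c = 0 -> (u^-1)%g c <= (v^-1)%g c),
      (forall c : 'I_n, val c = n.-1 -> (v^-1)%g c <= (u^-1)%g c) &
      u = v \/ perm_length u < perm_length v].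
Proof.
elim=> {u v} [u v /step_pos [H1 H2 H3]|u|u v w _ [A1 A2 A3] _ [B1 B2 B3]].
- by split => //; right.
- by split => //; left.
- split.
  + by move=> c Hc; apply: leq_trans (A1 c Hc) (B1 c Hc).
  + by move=> c Hc; apply: leq_trans (B2 c Hc) (A2 c Hc).
  + case: A3 => [->|A3] //; case: B3 => [<-|B3]; right => //; lia.
Qed.

Definition Dec n (k l : 'I_n) (u : {perm 'I_n}) :=
  [/\ nat_of_ord (u k) = 0, nat_of_ord (u l) = n.-1 &
      forall x y : 'I_n, x < y -> x != k -> x != l -> y != k -> y != l -> u y < u x].

Ltac ne_nat := do ? [ match goal with H : is_true (_ != _) |- _ => move/ordneq: H => H end ].

Ltac sne := first [done | by rewrite eq_sym | by apply: ordneq'; ne_nat; lia | lia].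

Lemma root_dec n (k l : 'I_n) (u : {perm 'I_n}) : is_w_root k l u -> Dec k l u.
Proof.
move=> [H1 H2 Hm]; split => // x y Hxy Hxk Hxl Hyk Hyl.
rewrite ltnNge; apply/negP => Hle.
have Hxy' : x != y by apply: ordneq'; lia.
have Hu : u x < u y by have := @perm_neq _ u _ _ Hxy'; lia.
have := lenL Hxy Hu.
set v := (u * _)%g.
have vk : v k = u k by rewrite permM tpermD ?(inj_eq perm_inj).
have vl : v l = u l by rewrite permM tpermD ?(inj_eq perm_inj).
have := Hm v; rewrite vk vl => /(_ H1 H2); lia.
Qed.

Lemma dec_root n (k l : 'I_n) (u : {perm 'I_n}) : Dec k l u -> is_w_root k l u.
Proof.
move=> [H1 H2 Hd]; split => // v V1 V2.
rewrite !lenE; apply: subset_leq_card; apply/subsetP => [[x y]].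
rewrite !inE /= => /andP [Hxy Hv]; rewrite Hxy /=.
have nx := ltn_ord (u x); have ny := ltn_ord (u y).
have nvx := ltn_ord (v x); have nvy := ltn_ord (v y).
have Hxy' : x != y by apply: ordneq'; lia.
case: (eqVneq x k) => [Ex|Hxk]; first by subst; lia.
case: (eqVneq y l) => [Ey|Hyl]; first by subst; lia.
case: (eqVneq y k) => [Ey|Hyk].
  by subst; have := @perm_neq _ u _ _ Hxy'; lia.
case: (eqVneq x l) => [Ex|Hxl].
  by subst; have := @perm_neq _ u _ _ Hxy'; lia.
exact: Hd.
Qed.

Lemma moveA n (i j p : 'I_n) (w : {perm 'I_n}) : Dec i j w -> i != j -> i < p -> p != j ->
  (forall x : 'I_n, i < x < p -> x = j) ->
  Dec p j (w * tperm (w i) (w p))%g /\ perm_length w < perm_length (w * tperm (w i) (w p))%g.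
Proof.
move=> [H1 H2 Hd] Hij Hip Hpj Hbt.
have Hpi : p != i by apply: ordneq'; lia.
split; last first.
  by apply: lenL => //; have := @perm_neq _ w _ _ Hpi; lia.
have uE z : (w * tperm (w i) (w p))%g z = w (tperm i p z) by rewrite permM tp_conj.
split; rewrite ?uE ?tpermR //.
  by rewrite tpermD // eq_sym.
move=> x y Hxy Hxp Hxj Hyp Hyj; rewrite !uE.
case: (eqVneq x i) => [Ex|Hxi].
  subst x; rewrite tpermL tpermD; last 2 first.
  - by apply: ordneq'; lia.
  - by rewrite eq_sym.
  have Hpy : p < y.
    case: (ltngtP y p) => H //.
    - by move/eqP: Hyj; rewrite (Hbt y) ?Hxy ?H.
    - by case/eqP: Hyp; apply: val_inj.
  apply: Hd; sne.
case: (eqVneq y i) => [Ey|Hyi].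
  subst y; rewrite tpermL (tpermD (z := x)); try sne.
  apply: Hd; sne.
rewrite (tpermD (z := x)) ?(tpermD (z := y)); try sne.
apply: Hd; sne.
Qed.

Lemma moveB n (i j p : 'I_n) (w : {perm 'I_n}) : Dec i j w -> i != j -> p < j -> p != i ->
  (forall x : 'I_n, p < x < j -> x = i) ->
  Dec i p (w * tperm (w p) (w j))%g /\ perm_length w < perm_length (w * tperm (w p) (w j))%g.
Proof.
move=> [H1 H2 Hd] Hij Hpj Hpi Hbt.
have Hjp : j != p by apply: ordneq'; lia.
split; last first.
  apply: lenL => //; have := @perm_neq _ w _ _ Hjp; have := ltn_ord (w p); lia.
have uE z : (w * tperm (w p) (w j))%g z = w (tperm p j z) by rewrite permM tp_conj.
split; rewrite ?uE ?tpermL //.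
  by rewrite tpermD // eq_sym.
move=> x y Hxy Hxi Hxp Hyi Hyp; rewrite !uE.
case: (eqVneq x j) => [Ex|Hxj].
  subst x; rewrite tpermR (tpermD (z := y)); try sne.
  apply: Hd; sne.
case: (eqVneq y j) => [Ey|Hyj].
  subst y; rewrite tpermR (tpermD (z := x)); try sne.
  have Hxp' : x < p.
    case: (ltngtP x p) => H //.
    - by move/eqP: Hxi; rewrite (Hbt x) ?Hxy ?H.
    - by case/eqP: Hxp; apply: val_inj.
  apply: Hd; sne.
rewrite (tpermD (z := x)) ?(tpermD (z := y)); try sne.
apply: Hd; sne.
Qed.

Lemma moveC n (i j : 'I_n) (w : {perm 'I_n}) : Dec i j w -> i < j ->
  Dec j i (w * tperm (w i) (w j))%g /\ perm_length w < perm_length (w * tperm (w i) (w j))%g.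
Proof.
move=> [H1 H2 Hd] Hij.
have Hji : j != i by apply: ordneq'; lia.
split; last first.
  apply: lenL => //; have := @perm_neq _ w _ _ Hji; lia.
have uE z : (w * tperm (w i) (w j))%g z = w (tperm i j z) by rewrite permM tp_conj.
split; rewrite ?uE ?tpermL ?tpermR //.
move=> x y Hxy Hxj Hxi Hyj Hyi; rewrite !uE.
rewrite (tpermD (z := x)) ?(tpermD (z := y)); try sne.
apply: Hd; sne.
Qed.
Lemma hbar_cases (h : nat -> nat) J : 0 < J ->
  (h0 h J.-1 = J.-1 /\ h J = J /\ hbar h J = J.-1) \/
  (~ (h0 h J.-1 = J.-1 /\ h J = J) /\ hbar h J = h J).
Proof.
move=> HJ; rewrite /hbar; case: (J =P 0) => [E|_]; first lia.
case: (h0 h J.-1 =P J.-1) => A; case: (h J =P J) => B /=; [left|right|right|right]; tauto.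
Qed.

Lemma h0E (h : nat -> nat) K : 0 < K -> h0 h K = h K.
Proof. by rewrite /h0; case: K. Qed.

Lemma h00 (h : nat -> nat) : h0 h 0 = 0.
Proof. by []. Qed.

Lemma hbar0 (h : nat -> nat) : hbar h 0 = 0.
Proof. by []. Qed.

Lemma comb_b n (h : nat -> nat) (I J : nat) : hessenberg n h ->
  1 <= I <= n -> 1 <= J <= n -> I <> J -> I <= h J -> ~ corner h I J ->
  (exists P, I < P <= h J /\ P <> J /\ forall X, I < X < P -> X = J) \/
  (exists Q, 1 <= Q < J /\ Q <> I /\ I <= h Q /\ forall X, Q < X < J -> X = I) \/
  (I < J /\ J <= h I).
Proof.
move=> [Hb Hm] HI HJ HIJ HIh Hnc.
have HhJ := Hb J HJ.
case: (I.+1 =P J) => HI1.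
- case: (leqP I.+2 (h J)) => H2.
    by left; exists I.+2; split; [lia|split; [lia|move=> X HX; lia]].
  have hJ : h J = J by lia.
  case: (leqP 2 I) => HI2.
    case: (leqP I (h I.-1)) => H3.
      right; left; exists I.-1; split; [lia|split; [lia|split; [lia|move=> X HX; lia]]].
    have := Hb I.-1; have := Hb I; have := Hm I.-1 I; case: (leqP J (h I)) => H4.
      by right; right; split; lia.
    move=> M1 B1 B2; exfalso; apply: Hnc.
    have hI : h I = I by have := B1 ltac:(lia); lia.
    have hI1 : h I.-1 = I.-1 by have := B2 ltac:(lia); lia.
    split.
    + case: (hbar_cases h (J:=J) ltac:(lia)) => [[_ [_ ->]]|[C ->]]; first lia.
      exfalso; apply: C; have -> : J.-1 = I by lia. rewrite h0E; lia.
    + have -> : J.-1 = I by lia.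
      case: (hbar_cases h (J:=J) ltac:(lia)) => [[_ [_ ->]]|[C ->]]; last first.
        exfalso; apply: C; have -> : J.-1 = I by lia. rewrite h0E; lia.
      case: (hbar_cases h (J:=I) ltac:(lia)) => [[_ [_ ->]]|[C ->]]; first lia.
      exfalso; apply: C; rewrite h0E; lia.
  have I1 : I = 1 by lia.
  subst I; case: (leqP J (h 1)) => H4; first by right; right; split; lia.
  exfalso; apply: Hnc.
  have hI : h 1 = 1 by have := Hb 1; lia.
  split.
  + case: (hbar_cases h (J:=J) ltac:(lia)) => [[_ [_ ->]]|[C ->]]; first lia.
    exfalso; apply: C; have -> : J.-1 = 1 by lia. rewrite h0E; lia.
  + have -> : J.-1 = 1 by lia.
    case: (hbar_cases h (J:=J) ltac:(lia)) => [[_ [_ ->]]|[C ->]]; last first.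
      exfalso; apply: C; have -> : J.-1 = 1 by lia. rewrite h0E; lia.
    case: (hbar_cases h (J:=1) ltac:(lia)) => [[_ [_ ->]]|[C ->]]; first lia.
    by exfalso; apply: C.
- case: (leqP I.+1 (h J)) => H2.
    by left; exists I.+1; split; [lia|split; [lia|move=> X HX; lia]].
  have hJ : h J = I by lia.
  case: (leqP 2 J) => HJ2.
    case: (leqP I (h J.-1)) => H3.
      right; left; exists J.-1; split; [lia|split; [lia|split; [lia|move=> X HX; lia]]].
    exfalso; apply: Hnc.
    have := Hb J.-1 ltac:(lia) => B1.
    split.
    + case: (hbar_cases h (J:=J) ltac:(lia)) => [[_ [E ->]]|[C ->]]; lia.
    + case: (hbar_cases h (J:=J) ltac:(lia)) => [[_ [E ->]]|[C ->]]; first lia.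
      case: (hbar_cases h (J:=J.-1) ltac:(lia)) => [[_ [E ->]]|[C' ->]]; lia.
  exfalso; apply: Hnc.
  have J1 : J = 1 by lia.
  subst J; split.
  + case: (hbar_cases h (J:=1) ltac:(lia)) => [[_ [E ->]]|[C ->]]; lia.
  + rewrite hbar0.
    case: (hbar_cases h (J:=1) ltac:(lia)) => [[_ [E ->]]|[C ->]]; lia.
Qed.

Lemma comb_a n (h : nat -> nat) (I J K L : nat) : hessenberg n h -> corner h I J ->
  1 <= J <= n -> 1 <= L <= n -> K <> L -> K <= h L -> I <= K -> L <= J -> K = I /\ L = J.
Proof.
move=> [Hb Hm] [HI Hc] HJ HL HKL HK HIK HLJ.
have BJ := Hb J HJ; have BL := Hb L HL.
have MLJ := Hm L J ltac:(lia) HLJ ltac:(lia).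
case: (hbar_cases h (J:=J) ltac:(lia)) => [[A [B E]]|[C E]]; rewrite E in HI Hc.
- case: (L =P J) => HLJ'; first by split; lia.
  have HJ2 : 2 <= J by lia.
  rewrite h0E in A; last lia.
  have ML1 := Hm L J.-1 ltac:(lia) ltac:(lia) ltac:(lia).
  case: (hbar_cases h (J:=J.-1) ltac:(lia)) => [[A' [B' E']]|[C' E']]; rewrite E' in Hc; last lia.
  have HJ3 : L <= J.-1.-1 by lia.
  rewrite h0E in A'; last lia.
  have := Hm L J.-1.-1 ltac:(lia) HJ3 ltac:(lia); lia.
- case: (L =P J) => HLJ'; first by split; lia.
  have HJ2 : 2 <= J by lia.
  have ML1 := Hm L J.-1 ltac:(lia) ltac:(lia) ltac:(lia).
  case: (hbar_cases h (J:=J.-1) ltac:(lia)) => [[A' [B' E']]|[C' E']]; rewrite E' in Hc; lia.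
Qed.

Lemma witness n (h : nat -> nat) (k l : 'I_n) (w : {perm 'I_n}) (a b : 'I_n) :
  in_DeltaH h k l -> Dec k l (w * tperm a b)%g -> a != b ->
  perm_length w < perm_length (w * tperm a b)%g ->
  exists v, in_OmegaH h v /\ bruhat_lt w v.
Proof.
move=> HD Hd Hab Hl; exists (w * tperm a b)%g; split.
  by exists k, l; split => //; apply: dec_root.
split; first by apply: rt_step; exists a, b.
by move=> E; rewrite -E in Hl; lia.
Qed.

Unset Implicit Arguments.

Theorem mainTheorem14 (n : nat) (h : nat -> nat) (i j : 'I_n) (w : {perm 'I_n}) :
  2 <= n -> hessenberg n h -> i != j -> is_w_root i j w ->
  (maximal_in_OmegaH h w <-> corner h i.+1 j.+1).
Proof.
move=> Hn Hh Hij Hw.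
have Dw := root_dec Hw.
have Hb := Hh.1.
have ni := ltn_ord i; have nj := ltn_ord j.
split.
- move=> [[i' [j' [HD Hr]]] Hmax].
  have Ei : i' = i.
    apply: (@perm_inj _ w); apply: val_inj; case: Hr => A _ _; case: Hw => B _ _; by rewrite /= A B.
  have Ej : j' = j.
    apply: (@perm_inj _ w); apply: val_inj; case: Hr => _ A _; case: Hw => _ B _; by rewrite /= A B.
  subst i' j'; case: HD => _ HD.
  have [//|Hnc] : corner h i.+1 j.+1 \/ ~ corner h i.+1 j.+1.
    rewrite /corner; case: (i.+1 =P hbar h j.+1) => E;
    case: (ltnP (hbar h j.+1.-1) (hbar h j.+1)) => L; [left|right|right|right]; try tauto; lia.
  exfalso; apply: Hmax.
  have Hij' := ordneq Hij.
  case: (comb_b Hh (I:=i.+1) (J:=j.+1) ltac:(lia) ltac:(lia) ltac:(lia) HD Hnc)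
    => [[P [HP1 [HP2 HP3]]]|[[Q [HQ1 [HQ2 [HQ3 HQ4]]]]|[HC1 HC2]]].
  + have HPn : P.-1 < n by have := Hb j.+1 ltac:(lia); lia.
    pose p : 'I_n := Ordinal HPn.
    have Hip : i < p by rewrite /=; lia.
    have Hpj : p != j by apply: ordneq'; rewrite /=; lia.
    have Hbt : forall x : 'I_n, i < x < p -> x = j.
      move=> x Hx; apply: val_inj => /=; have := HP3 x.+1; rewrite /= in Hx; lia.
    have [D L] := moveA Dw Hij Hip Hpj Hbt.
    apply: (witness (k := p) (l := j)) D _ L.
    * split => //; rewrite /=; lia.
    * rewrite (inj_eq perm_inj); apply: ordneq'; rewrite /=; lia.
  + have HQn : Q.-1 < n by lia.
    pose q : 'I_n := Ordinal HQn.
    have Hqj : q < j by rewrite /=; lia.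
    have Hqi : q != i by apply: ordneq'; rewrite /=; lia.
    have Hbt : forall x : 'I_n, q < x < j -> x = i.
      move=> x Hx; apply: val_inj => /=; have := HQ4 x.+1; rewrite /= in Hx; lia.
    have [D L] := moveB Dw Hij Hqj Hqi Hbt.
    apply: (witness (k := i) (l := q)) D _ L.
    * split; first by rewrite eq_sym.
      by have -> : q.+1 = Q by rewrite /=; lia.
    * rewrite (inj_eq perm_inj); apply: ordneq'; rewrite /=; lia.
  + have Hlt : i < j by lia.
    have [D L] := moveC Dw Hlt.
    apply: (witness (k := j) (l := i)) D _ L.
    * by split => //; rewrite eq_sym.
    * by rewrite (inj_eq perm_inj).
- move=> Hc.
  have HD : in_DeltaH h i j.
    split => //; case: Hc => -> _.
    have := Hb j.+1 ltac:(lia).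
    case: (hbar_cases h (J:=j.+1) ltac:(lia)) => [[_ [_ ->]]|[_ ->]]; lia.
  split; first by exists i, j.
  move=> [v [[k [l [[Hkl Hkh] Hv]]] [Hle Hne]]].
  have [P0 PN L] := le_pos Hle.
  have wi : nat_of_ord (w i) = 0 by case: Hw.
  have wj : nat_of_ord (w j) = n.-1 by case: Hw.
  have vk : v k = w i by apply: val_inj; case: Hv => A _ _; rewrite /= A wi.
  have vl : v l = w j by apply: val_inj; case: Hv => _ A _; rewrite /= A wj.
  have := P0 (w i) wi; rewrite -{2}vk !permK => Hik.
  have := PN (w j) wj; rewrite -{1}vl !permK => Hlj.
  have nk := ltn_ord k; have nl := ltn_ord l.
  have [Ek El] := comb_a (K := k.+1) (L := l.+1) Hh Hc ltac:(lia) ltac:(lia)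
    ltac:(have := ordneq Hkl; lia) Hkh ltac:(lia) ltac:(lia).
  have Ek' : k = i by apply: val_inj; rewrite /=; lia.
  have El' : l = j by apply: val_inj; rewrite /=; lia.
  subst k l.
  case: Hw => _ _ M1; case: Hv => A1 A2 M2.
  have := M1 v A1 A2; have := M2 w wi wj.
  case: L => [E|L]; first by move=> *; apply: Hne.
  lia.
Qed.
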